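(* Let $U\subset\mathbb R$ be a closed interval, $f^l,f^r\in C(U;\mathbb R)$, and let $\mathcal G_{KRT}$ be the set of pairs $(u^l,u^r)\in U\times U$ with $f^l(u^l)=f^r(u^r)=:s$ and either $u^l=u^r$; or $u^l<u^r$ and $\max\{f^l(z),f^r(z)\}\ge s$ for all $z\in[u^l,u^r]$; or $u^l>u^r$ and $\min\{f^l(z),f^r(z)\}\le s$ for all $z\in[u^r,u^l]$. (i) There is no L1D germ strictly containing $\mathcal G_{KRT}$ (i.e. $\mathcal G_{KRT}$ admits no non-trivial L1D extension). (ii) If the crossing condition holds, namely there exists $u_\chi\in\mathbb R$ with $\operatorname{sign}(z-u_\chi)(f^r(z)-f^l(z))\ge0$ for all $z\in U$, then $\mathcal G_{KRT}$ is an L1D germ (and therefore a maximal L1D germ).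
   Context: $q^{l,r}(z,k)=\operatorname{sign}(z-k)(f^{l,r}(z)-f^{l,r}(k))$. A germ is a set $\mathcal G\subset U\times U$ of pairs with $f^l(u^l)=f^r(u^r)$; it is L1D if $q^l(u^l,\hat u^l)\ge q^r(u^r,\hat u^r)$ for all $(u^l,u^r),(\hat u^l,\hat u^r)\in\mathcal G$; an L1D germ is maximal if no strictly larger germ is L1D. *)

(* Defs.v *)
From Stdlib Require Import Reals Lra.
Open Scope R_scope.

Definition sign (x : R) : R :=
  match Rcase_abs x with
  | left _ => -1
  | right _ => if Req_EM_T x 0 then 0 else 1
  end.

(* U is a closed interval: nonempty, order-convex, topologically closed
   (covers [a,b], [a,+oo), (-oo,b], R). *)
Definition closed_interval (U : R -> Prop) : Prop :=
  (exists x, U x) /\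
  (forall x y z, U x -> U z -> x <= y <= z -> U y) /\
  closed_set U.

Definition continuous_on (U : R -> Prop) (f : R -> R) : Prop :=
  forall x, U x -> continue_in f U x.

Definition q (f : R -> R) (z k : R) : R := sign (z - k) * (f z - f k).

Definition germ (U : R -> Prop) (fl fr : R -> R) (G : R * R -> Prop) : Prop :=
  forall p, G p -> U (fst p) /\ U (snd p) /\ fl (fst p) = fr (snd p).

Definition L1D (fl fr : R -> R) (G : R * R -> Prop) : Prop :=
  forall p p', G p -> G p' ->
    q fl (fst p) (fst p') >= q fr (snd p) (snd p').

Definition L1D_germ U fl fr G : Prop := germ U fl fr G /\ L1D fl fr G.

Definition strictly_contains (G' G : R * R -> Prop) : Prop :=
  (forall p, G p -> G' p) /\ (exists p, G' p /\ ~ G p).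

Definition maximal_L1D_germ U fl fr G : Prop :=
  L1D_germ U fl fr G /\
  ~ (exists G', L1D_germ U fl fr G' /\ strictly_contains G' G).

Definition G_KRT (U : R -> Prop) (fl fr : R -> R) (p : R * R) : Prop :=
  let ul := fst p in let ur := snd p in
  U ul /\ U ur /\ fl ul = fr ur /\
  (ul = ur \/
   (ul < ur /\ forall z, ul <= z <= ur -> Rmax (fl z) (fr z) >= fl ul) \/
   (ul > ur /\ forall z, ur <= z <= ul -> Rmin (fl z) (fr z) <= fl ul)).

Definition crossing_condition (U : R -> Prop) (fl fr : R -> R) : Prop :=
  exists uchi : R, forall z, U z -> sign (z - uchi) * (fr z - fl z) >= 0.

(* Main.v *)
Require Import Defs.
From Stdlib Require Import Reals Lra Classical Ranalysis5.
Open Scope R_scope.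

Lemma cont_max2 (F G : R -> R) x : continuity_pt F x -> continuity_pt G x ->
  continuity_pt (fun y => Rmax (F y) (G y)) x.
Proof.
  unfold continuity_pt, continue_in, limit1_in, limit_in; simpl; unfold Rdist.
  intros HF HG eps He.
  destruct (HF eps He) as [a1 [Ha1 H1]]. destruct (HG eps He) as [a2 [Ha2 H2]].
  exists (Rmin a1 a2). split. { apply Rmin_case; lra. }
  intros y [Hy Hd].
  assert (Hd1 : Rabs (y - x) < a1) by (pose proof (Rmin_l a1 a2); lra).
  assert (Hd2 : Rabs (y - x) < a2) by (pose proof (Rmin_r a1 a2); lra).
  specialize (H1 y (conj Hy Hd1)). specialize (H2 y (conj Hy Hd2)).
  revert H1 H2. unfold Rmax; repeat destruct Rle_dec; unfold Rabs; repeat destruct Rcase_abs; lra.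
Qed.

Lemma cont_min2 (F G : R -> R) x : continuity_pt F x -> continuity_pt G x ->
  continuity_pt (fun y => Rmin (F y) (G y)) x.
Proof.
  unfold continuity_pt, continue_in, limit1_in, limit_in; simpl; unfold Rdist.
  intros HF HG eps He.
  destruct (HF eps He) as [a1 [Ha1 H1]]. destruct (HG eps He) as [a2 [Ha2 H2]].
  exists (Rmin a1 a2). split. { apply Rmin_case; lra. }
  intros y [Hy Hd].
  assert (Hd1 : Rabs (y - x) < a1) by (pose proof (Rmin_l a1 a2); lra).
  assert (Hd2 : Rabs (y - x) < a2) by (pose proof (Rmin_r a1 a2); lra).
  specialize (H1 y (conj Hy Hd1)). specialize (H2 y (conj Hy Hd2)).
  revert H1 H2. unfold Rmin; repeat destruct Rle_dec; unfold Rabs; repeat destruct Rcase_abs; lra.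
Qed.

Definition cl (a b x : R) := Rmax a (Rmin b x).

Lemma cl_id a b x : a <= x <= b -> cl a b x = x.
Proof. unfold cl, Rmax, Rmin; intros; repeat destruct Rle_dec; lra. Qed.

Lemma cl_in a b x : a <= b -> a <= cl a b x <= b.
Proof. unfold cl, Rmax, Rmin; intros; repeat destruct Rle_dec; lra. Qed.

Lemma cl_lip a b x y : a <= b -> Rabs (cl a b y - cl a b x) <= Rabs (y - x).
Proof. unfold cl, Rmax, Rmin; intros; repeat destruct Rle_dec; unfold Rabs; repeat destruct Rcase_abs; lra. Qed.

Lemma cl_cont U f a b : a <= b -> (forall y, a <= y <= b -> U y) -> continuous_on U f ->
  forall x, continuity_pt (fun y => f (cl a b y)) x.
Proof.
  intros hab hU hf x.
  unfold continuity_pt, continue_in, limit1_in, limit_in; simpl; unfold Rdist.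
  intros eps He.
  pose proof (cl_in a b x hab) as Hc.
  destruct (hf (cl a b x) (hU _ Hc) eps He) as [al [Hal H]].
  exists al; split; auto.
  intros y [_ Hy].
  destruct (Req_dec (cl a b y) (cl a b x)) as [E|E].
  { rewrite E. replace (f (cl a b x) - f (cl a b x)) with 0 by ring. rewrite Rabs_R0; lra. }
  apply H. split.
  - split; [apply hU, cl_in; auto | auto].
  - simpl; unfold Rdist. pose proof (cl_lip a b x y hab). lra.
Qed.

Lemma IVT_gen (h : R -> R) x y v : x <= y -> (forall z, x <= z <= y -> continuity_pt h z) ->
  (h x <= v <= h y \/ h y <= v <= h x) -> exists z, x <= z <= y /\ h z = v.
Proof.
  intros hxy hc hv.
  destruct (Req_dec (h x) v) as [E|E]. { exists x; split; auto; lra. }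
  destruct (Req_dec (h y) v) as [E'|E']. { exists y; split; auto; lra. }
  assert (hlt : x < y). { destruct hxy as [|H]; auto. subst; lra. }
  destruct hv as [hv|hv].
  - destruct (IVT_interv (fun z => h z - v) x y) as [z [Hz1 Hz2]]; auto; try lra.
    intros a Ha. apply continuity_pt_minus; auto. apply continuity_pt_const. intros ? ?; auto.
    exists z; split; auto; lra.
  - destruct (IVT_interv (fun z => v - h z) x y) as [z [Hz1 Hz2]]; auto; try lra.
    intros a Ha. apply continuity_pt_minus; auto. apply continuity_pt_const. intros ? ?; auto.
    exists z; split; auto; lra.
Qed.

Lemma conv U : closed_interval U -> forall a b y, U a -> U b -> a <= y <= b -> U y.
Proof. intros [_ [H _]] a b y ha hb hy; apply (H a y b); auto. Qed.

Lemma sign_pos x : x > 0 -> sign x = 1.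
Proof. unfold sign; intros; destruct Rcase_abs; [lra|]. destruct Req_EM_T; [lra|auto]. Qed.
Lemma sign_neg x : x < 0 -> sign x = -1.
Proof. unfold sign; intros; destruct Rcase_abs; [auto|lra]. Qed.
Lemma sign_zero x : x = 0 -> sign x = 0.
Proof. unfold sign; intros; destruct Rcase_abs; [lra|]. destruct Req_EM_T; [auto|lra]. Qed.

Lemma key_i U fl fr (hU : closed_interval U) (hfl : continuous_on U fl) (hfr : continuous_on U fr) a b :
  U a -> U b -> fl a = fr b -> ~ G_KRT U fl fr (a,b) ->
  exists c d, G_KRT U fl fr (c,d) /\ q fl a c < q fr b d.
Proof.
  intros ha hb hs hn.
  destruct (total_order_T a b) as [[hab|hab]|hab].
  -
    assert (Hz : exists z, a <= z <= b /\ Rmax (fl z) (fr z) < fl a).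
    { apply NNPP; intro Hn. apply hn. unfold G_KRT; simpl. repeat split; auto.
      right; left; split; auto. intros z Hz. apply Rnot_lt_ge; intro Hc; apply Hn; exists z; split; auto. }
    destruct Hz as [z [Hz Hzs]].
    assert (hUab : forall y, a <= y <= b -> U y) by (intros y Hy; apply (conv U hU a b y ha hb Hy)).
    assert (hab' : a <= b) by lra.
    pose proof (cl_cont U fl a b hab' hUab hfl) as cF.
    pose proof (cl_cont U fr a b hab' hUab hfr) as cG.
    destruct (continuity_ab_min (fun x => Rmax (fl (cl a b x)) (fr (cl a b x))) a b hab')
      as [z0 [Hmin Hz0]].
    { intros; apply cont_max2; auto. }
    assert (Hmin' : forall c, a <= c <= b -> Rmax (fl z0) (fr z0) <= Rmax (fl c) (fr c)).
    { intros c Hc. specialize (Hmin c Hc). simpl in Hmin. rewrite !cl_id in Hmin; auto. }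
    pose proof (Hmin' z Hz) as Hmz.
    destruct (Rle_dec (fr z0) (fl z0)) as [Hle|Hle].
    + rewrite Rmax_left in Hmin', Hmz by lra.
      destruct (IVT_gen (fun x => fr (cl a b x)) z0 b (fl z0)) as [d [Hd Hfd]]; try lra.
      { intros; auto. }
      { left. rewrite !cl_id; lra. }
      rewrite cl_id in Hfd by lra.
      assert (Hdb : d <> b) by (intro; subst; lra).
      assert (Haz : a <> z0) by (intro; subst; lra).
      exists z0, d. split.
      * unfold G_KRT; simpl. split; [apply hUab; lra|]. split; [apply hUab; lra|]. split; [lra|].
        destruct (Req_dec z0 d) as [E|E]; [left; auto|right; left].
        split; [lra|]. intros y Hy. apply Rle_ge, Hmin'. lra.
      * unfold q. rewrite sign_neg by lra. rewrite sign_pos by lra. lra.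
    + rewrite Rmax_right in Hmin', Hmz by lra.
      destruct (IVT_gen (fun x => fl (cl a b x)) a z0 (fr z0)) as [c [Hc Hfc]]; try lra.
      { intros; auto. }
      { right. rewrite !cl_id; lra. }
      rewrite cl_id in Hfc by lra.
      assert (Hca : c <> a) by (intro; subst; lra).
      assert (Hbz : b <> z0) by (intro; subst; lra).
      exists c, z0. split.
      * unfold G_KRT; simpl. split; [apply hUab; lra|]. split; [apply hUab; lra|]. split; [lra|].
        destruct (Req_dec c z0) as [E|E]; [left; auto|right; left].
        split; [lra|]. intros y Hy. rewrite Hfc. apply Rle_ge, Hmin'. lra.
      * unfold q. rewrite sign_neg by lra. rewrite sign_pos by lra. lra.
  - exfalso; apply hn. unfold G_KRT; simpl; repeat split; auto.
  -
    assert (Hz : exists z, b <= z <= a /\ Rmin (fl z) (fr z) > fl a).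
    { apply NNPP; intro Hn. apply hn. unfold G_KRT; simpl. repeat split; auto.
      right; right; split; auto. intros z Hz. apply Rnot_lt_le; intro Hc; apply Hn; exists z; split; auto. }
    destruct Hz as [z [Hz Hzs]].
    assert (hUab : forall y, b <= y <= a -> U y) by (intros y Hy; apply (conv U hU b a y hb ha Hy)).
    assert (hab' : b <= a) by lra.
    pose proof (cl_cont U fl b a hab' hUab hfl) as cF.
    pose proof (cl_cont U fr b a hab' hUab hfr) as cG.
    destruct (continuity_ab_maj (fun x => Rmin (fl (cl b a x)) (fr (cl b a x))) b a hab')
      as [z0 [Hmax Hz0]].
    { intros; apply cont_min2; auto. }
    assert (Hmax' : forall c, b <= c <= a -> Rmin (fl c) (fr c) <= Rmin (fl z0) (fr z0)).
    { intros c Hc. specialize (Hmax c Hc). simpl in Hmax. rewrite !cl_id in Hmax; auto. }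
    pose proof (Hmax' z Hz) as Hmz.
    destruct (Rle_dec (fl z0) (fr z0)) as [Hle|Hle].
    + rewrite (Rmin_left (fl z0) (fr z0)) in Hmax', Hmz by lra.
      destruct (IVT_gen (fun x => fr (cl b a x)) b z0 (fl z0)) as [d [Hd Hfd]]; try lra.
      { intros; auto. }
      { left. rewrite !cl_id; lra. }
      rewrite cl_id in Hfd by lra.
      assert (Hdb : d <> b) by (intro; subst; lra).
      assert (Haz : a <> z0) by (intro; subst; lra).
      exists z0, d. split.
      * unfold G_KRT; simpl. split; [apply hUab; lra|]. split; [apply hUab; lra|]. split; [lra|].
        destruct (Req_dec z0 d) as [E|E]; [left; auto|right; right].
        split; [lra|]. intros y Hy. apply Hmax'. lra.
      * unfold q. rewrite sign_pos by lra. rewrite sign_neg by lra. lra.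
    + rewrite (Rmin_right (fl z0) (fr z0)) in Hmax', Hmz by lra.
      destruct (IVT_gen (fun x => fl (cl b a x)) z0 a (fr z0)) as [c [Hc Hfc]]; try lra.
      { intros; auto. }
      { right. rewrite !cl_id; lra. }
      rewrite cl_id in Hfc by lra.
      assert (Hca : c <> a) by (intro; subst; lra).
      assert (Hbz : b <> z0) by (intro; subst; lra).
      exists c, z0. split.
      * unfold G_KRT; simpl. split; [apply hUab; lra|]. split; [apply hUab; lra|]. split; [lra|].
        destruct (Req_dec c z0) as [E|E]; [left; auto|right; right].
        split; [lra|]. intros y Hy. rewrite Hfc. apply Hmax'. lra.
      * unfold q. rewrite sign_pos by lra. rewrite sign_neg by lra. lra.
Qed.

Lemma sign_bounds x : -1 <= sign x <= 1.
Proof. unfold sign; destruct Rcase_abs; [lra|]. destruct Req_EM_T; lra. Qed.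

Lemma sign_opp x : sign (- x) = - sign x.
Proof.
  destruct (total_order_T x 0) as [[h|h]|h].
  - rewrite sign_pos by lra. rewrite sign_neg by lra. ring.
  - rewrite !sign_zero by lra. ring.
  - rewrite sign_neg by lra. rewrite sign_pos by lra. ring.
Qed.

Lemma no_straddle U fl fr (hU : closed_interval U) (hfl : continuous_on U fl) (hfr : continuous_on U fr)
  e1 e2 s t : e1 < e2 -> U e1 -> U e2 -> s > t ->
  (forall y, e1 <= y <= e2 -> Rmax (fl y) (fr y) >= s /\ Rmin (fl y) (fr y) <= t) ->
  fl e1 > fr e1 -> fl e2 < fr e2 -> False.
Proof.
  intros h12 h1 h2 hst hy g1 g2.
  assert (hUe : forall y, e1 <= y <= e2 -> U y) by (intros y Hy; apply (conv U hU e1 e2 y h1 h2 Hy)).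
  assert (h12' : e1 <= e2) by lra.
  pose proof (cl_cont U fl e1 e2 h12' hUe hfl) as cF.
  pose proof (cl_cont U fr e1 e2 h12' hUe hfr) as cG.
  destruct (IVT_gen (fun x => fl (cl e1 e2 x) - fr (cl e1 e2 x)) e1 e2 0) as [z [Hz Hfz]]; auto.
  { intros; apply continuity_pt_minus; auto. }
  { right. rewrite !cl_id; lra. }
  rewrite cl_id in Hfz by lra.
  destruct (hy z Hz) as [A B]. revert A B. unfold Rmax, Rmin; repeat destruct Rle_dec; lra.
Qed.

Lemma cross_r U fl fr u (Hu : forall z, U z -> sign (z - u) * (fr z - fl z) >= 0) z :
  U z -> fr z > fl z -> z >= u.
Proof.
  intros hz h. apply Rnot_lt_ge; intro hl. specialize (Hu z hz). rewrite sign_neg in Hu by lra. lra.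
Qed.

Lemma cross_l U fl fr u (Hu : forall z, U z -> sign (z - u) * (fr z - fl z) >= 0) z :
  U z -> fr z < fl z -> z <= u.
Proof.
  intros hz h. apply Rnot_lt_le; intro hl. specialize (Hu z hz). rewrite sign_pos in Hu by lra. lra.
Qed.

Lemma key_ii U fl fr (hU : closed_interval U) (hfl : continuous_on U fl) (hfr : continuous_on U fr)
  (hc : crossing_condition U fl fr) a b c d :
  G_KRT U fl fr (a,b) -> G_KRT U fl fr (c,d) -> fl a > fl c -> sign (a - c) >= sign (b - d).
Proof.
  destruct hc as [u Hu].
  unfold G_KRT; simpl.
  intros [ha [hb [hs Tab]]] [hc [hd [ht Tcd]]] hst.
  apply Rnot_lt_ge; intro Hlt.
  assert (hac : a < c).
  { destruct (total_order_T a c) as [[h|h]|h]; auto.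
    - subst; lra.
    - rewrite sign_pos in Hlt by lra. pose proof (sign_bounds (b - d)); lra. }
  assert (hdb : d < b).
  { destruct (total_order_T b d) as [[h|h]|h]; try lra.
    - rewrite sign_neg in Hlt by lra. rewrite sign_neg in Hlt by lra. lra.
    - subst; lra. }
  clear Hlt.
  destruct Tab as [Eab|[[Lab Fab]|[Gab Fab]]].
  - subst b. destruct Tcd as [E|[[L F]|[G F]]]; try lra.
    specialize (F a ltac:(lra)). revert F. unfold Rmin; destruct Rle_dec; lra.
  - destruct Tcd as [E|[[L F]|[G F]]].
    + subst d. specialize (Fab c ltac:(lra)). revert Fab. unfold Rmax; destruct Rle_dec; lra.
    +
      assert (Uc : fr c > fl c).
      { specialize (Fab c ltac:(lra)). revert Fab. unfold Rmax; destruct Rle_dec; lra. }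
      assert (Ud : fr d < fl d).
      { specialize (Fab d ltac:(lra)). revert Fab. unfold Rmax; destruct Rle_dec; lra. }
      pose proof (cross_r U fl fr u Hu c hc Uc). pose proof (cross_l U fl fr u Hu d hd Ud). lra.
    +
      assert (hy : forall y, Rmax a d <= y <= Rmin b c ->
                Rmax (fl y) (fr y) >= fl a /\ Rmin (fl y) (fr y) <= fl c).
      { intros y Hy. pose proof (Rmax_l a d). pose proof (Rmax_r a d).
        pose proof (Rmin_l b c). pose proof (Rmin_r b c).
        split; [apply Fab; lra | apply F; lra]. }
      apply (no_straddle U fl fr hU hfl hfr (Rmax a d) (Rmin b c) (fl a) (fl c)); auto.
      * unfold Rmax, Rmin; repeat destruct Rle_dec; lra.
      * unfold Rmax; destruct Rle_dec; auto.
      * unfold Rmin; destruct Rle_dec; auto.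
      * pose proof (Rmax_l a d). pose proof (Rmax_r a d).
        assert (hh : Rmax a d <= Rmax a d <= Rmin b c) by
          (split; [lra|]; unfold Rmax, Rmin; repeat destruct Rle_dec; lra).
        destruct (hy _ hh) as [A B]. revert A B.
        unfold Rmax at 1 2 3; destruct (Rle_dec a d);
        unfold Rmax, Rmin; repeat destruct Rle_dec; lra.
      * pose proof (Rmin_l b c). pose proof (Rmin_r b c).
        assert (hh : Rmax a d <= Rmin b c <= Rmin b c) by
          (split; [|lra]; unfold Rmax, Rmin; repeat destruct Rle_dec; lra).
        destruct (hy _ hh) as [A B]. revert A B.
        unfold Rmin at 1 2 3; destruct (Rle_dec b c);
        unfold Rmax, Rmin; repeat destruct Rle_dec; lra.
  - destruct Tcd as [E|[[L F]|[G F]]]; try lra.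
    assert (Ub : fr b > fl b).
    { specialize (F b ltac:(lra)). revert F. unfold Rmin; destruct Rle_dec; lra. }
    assert (Ua : fr a < fl a).
    { specialize (F a ltac:(lra)). revert F. unfold Rmin; destruct Rle_dec; lra. }
    pose proof (cross_r U fl fr u Hu b hb Ub). pose proof (cross_l U fl fr u Hu a ha Ua). lra.
Qed.

Theorem proposition4p11 (U : R -> Prop) (fl fr : R -> R)
  (hU : closed_interval U) (hfl : continuous_on U fl) (hfr : continuous_on U fr) :
  (~ exists G', L1D_germ U fl fr G' /\ strictly_contains G' (G_KRT U fl fr)) /\
  (crossing_condition U fl fr ->
     L1D_germ U fl fr (G_KRT U fl fr) /\ maximal_L1D_germ U fl fr (G_KRT U fl fr)).
Proof.
  assert (P1 : ~ exists G', L1D_germ U fl fr G' /\ strictly_contains G' (G_KRT U fl fr)).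
  { intros [G' [[Hgerm HL1D] [Hsub [[a b] [Hp Hnp]]]]].
    destruct (Hgerm _ Hp) as [ha [hb hs]]; simpl in ha, hb, hs.
    destruct (key_i U fl fr hU hfl hfr a b ha hb hs Hnp) as [c [d [Hcd Hq]]].
    specialize (HL1D (a,b) (c,d) Hp (Hsub _ Hcd)); simpl in HL1D; lra. }
  split; auto.
  intros hc.
  assert (L : L1D_germ U fl fr (G_KRT U fl fr)).
  { split.
    - intros [a b] [ha [hb [hs _]]]; simpl; auto.
    - intros [a b] [c d] H1 H2; simpl. unfold q.
      pose proof H1 as [_ [_ [hs _]]]. pose proof H2 as [_ [_ [ht _]]]. simpl in hs, ht.
      rewrite <- hs, <- ht.
      destruct (total_order_T (fl a) (fl c)) as [[h|h]|h].
      + pose proof (key_ii U fl fr hU hfl hfr hc c d a b H2 H1 h) as K.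
        replace (c - a) with (- (a - c)) in K by ring.
        replace (d - b) with (- (b - d)) in K by ring.
        rewrite !sign_opp in K. nra.
      + rewrite h. lra.
      + pose proof (key_ii U fl fr hU hfl hfr hc a b c d H1 H2 h) as K. nra. }
  split; auto. split; auto.
Qed.
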